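(* Let $n,m,n_f,\ell\in\mathbb{N}$, let $w>1$ be a number representable with $n$ bits of which the first $m$ are its integer part, and let $f\in[0,1]$ be given with $n_f$ bits after the binary point. Then the value $\hat{z}$ returned by Algorithm FractionalPower$(w,f,n,m,n_f,\ell)$ (described in the context), which performs arithmetic with $b=\max\{n,n_f,\lceil 5(\ell+2m+\ln n_f)\rceil,40\}$ bits after the binary point, satisfies $$|\hat{z}-w^f|\leq\left(\frac12\right)^{\ell-1}.$$
   Context: Fixed precision representation: a number $w\ge 0$ ''given by $n$ bits of which the first $m$ correspond to its integer part'' means $w=\sum_{j=m-n}^{m-1} w^{(j)}2^j$ with $w^{(j)}\in\{0,1\}$. For $x\geq 0$, ''truncating $x$ to $b$ bits after the binary point'' means replacing $x$ by $\lfloor 2^b x\rfloor/2^b$. All arithmetic inside a step is performed exactly; only the stated truncations introduce error. Algorithm SQRT$(w,n,m,b)$ (input $w\geq 1$): if $w=1$, return $1$. Otherwise: let $p\in\mathbb{N}$ with $2^{p}>w\geq 2^{p-1}$ and set $\hat{x}_0=2^{-p}$; let $s=\lceil\log_2 b\rceil$; for $i=1,\dots,s$ compute exactly $x_i=-w\hat{x}_{i-1}^2+2\hat{x}_{i-1}$ and let $\hat{x}_i$ be $x_i$ truncated to $b$ bits. Then let $q\in\mathbb{N}$ with $2^{1-q}>\hat{x}_s\geq 2^{-q}$ and set $\hat{y}_0=2^{\lfloor (q-1)/2\rfloor}$; for $j=1,\dots,s$ compute exactly $y_j=\frac12(3\hat{y}_{j-1}-\hat{x}_s\hat{y}_{j-1}^3)$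 and let $\hat{y}_j$ be $y_j$ truncated to $b$ bits. Return $\hat{y}_s$. Algorithm PowerOf2Roots$(w,k,n,m,b)$: set $\hat{z}_1=$ SQRT$(w,n,m,b)$; for $i=2,\dots,k$ set $\hat{z}_i=$ SQRT$(\hat{z}_{i-1},m+b,m,b)$. Return $\hat{z}_1,\dots,\hat{z}_k$. Algorithm FractionalPower$(w,f,n,m,n_f,\ell)$ (input $w\geq1$, $f=\sum_{i=1}^{n_f}f_i2^{-i}\in[0,1]$ or $f=1$, with bits $f_i\in\{0,1\}$): set $b=\max\{n,n_f,\lceil 5(\ell+2m+\ln n_f)\rceil,40\}$. If $f=1$ return $w$; if $f=0$ return $1$. Let $\hat{w}_1,\dots,\hat{w}_{n_f}$ be the outputs of PowerOf2Roots$(w,n_f,n,m,b)$. Set $\hat{z}=1$; for $i=1,\dots,n_f$, if $f_i=1$ replace $\hat{z}$ by $\hat{z}\hat{w}_i$ truncated to $b$ bits after the binary point. Return $\hat{z}$. *)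

(* Defs.v *)
From Stdlib Require Import Reals Lra Lia ZArith.
Open Scope R_scope.

Definition trunc (b : nat) (x : R) : R := IZR (Int_part (2 ^ b * x)) / 2 ^ b.

Definition Zceil (x : R) : Z := (- Int_part (- x))%Z.

Definition ilog2 (x : R) : Z := Int_part (ln x / ln 2).

Fixpoint bitsum (bits : nat -> bool) (lo : Z) (len : nat) : R :=
  match len with
  | O => 0
  | S k => bitsum bits lo k + (if bits k then powerRZ 2 (lo + Z.of_nat k) else 0)
  end.

Fixpoint fracsum (fbits : nat -> bool) (nf : nat) : R :=
  match nf with
  | O => 0
  | S k => fracsum fbits k + (if fbits (S k) then powerRZ 2 (- Z.of_nat (S k)) else 0)
  end.

(* Newton iteration for 1/w: hat x_i = trunc_b(-w hat x_{i-1}^2 + 2 hat x_{i-1}) *)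
Fixpoint xiter (w x0 : R) (b k : nat) : R :=
  match k with
  | O => x0
  | S k' => let x := xiter w x0 b k' in trunc b (- w * x ^ 2 + 2 * x)
  end.

(* Newton iteration for 1/sqrt(xs): hat y_j = trunc_b((3 hat y_{j-1} - xs hat y_{j-1}^3)/2) *)
Fixpoint yiter (xs y0 : R) (b k : nat) : R :=
  match k with
  | O => y0
  | S k' => let y := yiter xs y0 b k' in trunc b ((3 * y - xs * y ^ 3) / 2)
  end.

(* Algorithm SQRT(w, n, m, b)  (n, m only describe the input format) *)
Definition SQRT (w : R) (n m b : nat) : R :=
  if Req_EM_T w 1 then 1 else
  let p := (ilog2 w + 1)%Z in
  let x0 := powerRZ 2 (- p) in
  let s := Nat.log2_up b in
  let xs := xiter w x0 b s in
  let q := (- ilog2 xs)%Z in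
  let y0 := powerRZ 2 ((q - 1) / 2)%Z in
  yiter xs y0 b s.

Fixpoint PowerOf2Root (w : R) (i n m b : nat) : R :=
  match i with
  | O => w (* unused *)
  | S O => SQRT w n m b
  | S i' => SQRT (PowerOf2Root w i' n m b) (m + b) m b
  end.

Fixpoint prodloop (w : R) (fbits : nat -> bool) (k n m b : nat) : R :=
  match k with
  | O => 1
  | S k' => let z := prodloop w fbits k' n m b in
            if fbits (S k') then trunc b (z * PowerOf2Root w (S k') n m b) else z
  end.

Definition FP_b (n m nf l : nat) : nat :=
  Nat.max n (Nat.max nf
    (Nat.max (Z.to_nat (Zceil (5 * (INR l + 2 * INR m + ln (INR nf))))) 40)).

(* Algorithm FractionalPower(w, f, n, m, n_f, l); fbits i is the i-th bit of f *)
Definition FractionalPower (w f : R) (fbits : nat -> bool) (n m nf l : nat) : R :=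
  let b := FP_b n m nf l in
  if Req_EM_T f 1 then w else
  if Req_EM_T f 0 then 1 else
  prodloop w fbits nf n m b.

(* Main.v *)
Require Import Defs.
From Stdlib Require Import Reals ZArith Lra Lia Psatz.
Open Scope R_scope.

Lemma trunc_bounds b x : x - (/2)^b < trunc b x <= x.
Proof.
  unfold trunc. destruct (base_Int_part (2^b*x)) as [H1 H2].
  assert (Hp : 0 < 2^b) by (apply pow_lt; lra).
  rewrite pow_inv. split.
  - apply Rmult_lt_reg_r with (2^b); auto.
    unfold Rdiv. rewrite Rmult_assoc, Rinv_l by lra.
    replace ((x - / 2 ^ b) * 2 ^ b) with (2^b*x - 1) by (field; lra). lra.
  - apply Rmult_le_reg_r with (2^b); auto.
    unfold Rdiv. rewrite Rmult_assoc, Rinv_l by lra. lra.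
Qed.

Lemma pRZ_exp z : powerRZ 2 z = exp (IZR z * ln 2).
Proof. rewrite powerRZ_Rpower by lra. reflexivity. Qed.

Lemma ilog2_spec x : 0 < x ->
  exp (IZR (ilog2 x) * ln 2) <= x < exp ((IZR (ilog2 x) + 1) * ln 2).
Proof.
  intros Hx. unfold ilog2. destruct (base_Int_part (ln x / ln 2)) as [H1 H2].
  assert (Hl : 0 < ln 2) by (pose proof ln_lt_2; lra).
  set (k := IZR (Int_part (ln x / ln 2))) in *.
  split.
  - apply Rle_trans with (exp (ln x)); [| rewrite exp_ln; lra].
    destruct (Req_dec (k * ln 2) (ln x)) as [E|E]; [rewrite E; lra|].
    left. apply exp_increasing.
    assert (k * ln 2 <= ln x / ln 2 * ln 2) by (apply Rmult_le_compat_r; lra).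
    replace (ln x / ln 2 * ln 2) with (ln x) in H by (field; lra). lra.
  - apply Rle_lt_trans with (exp (ln x)); [rewrite exp_ln; lra|]. apply exp_increasing.
    assert (ln x / ln 2 * ln 2 < (k+1) * ln 2) by (apply Rmult_lt_compat_r; lra).
    replace (ln x / ln 2 * ln 2) with (ln x) in H by (field; lra). lra.
Qed.

Lemma pow_le_one a k : 0 <= a <= 1 -> a ^ k <= 1.
Proof. intros H. induction k; simpl; [lra|]. pose proof (pow_le a k). nra. Qed.

Lemma dbl (u : nat -> R) a th :
  0 <= a <= /4 -> 0 <= th <= /100 ->
  (forall j, 0 <= u j) ->
  (forall j, u (S j) <= u j ^ 2 + th) ->
  u 0%nat <= a + 3*th ->
  forall j, u j <= a ^ (2^j) + 3*th.
Proof.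
  intros Ha Ht Hu Hs H0 j. induction j as [|j IH]; [simpl; lra|].
  assert (HA : 0 <= a ^ (2^j) <= a).
  { split. apply pow_le; lra.
    assert (1 <= 2^j)%nat by (apply Nat.le_succ_l, Nat.neq_0_lt_0, Nat.pow_nonzero; lia).
    replace (2^j)%nat with (S (2^j - 1)) by lia. simpl.
    assert (a ^ (2^j-1) <= 1) by (apply pow_le_one; lra).
    pose proof (pow_le a (2^j-1)). nra. }
  replace (2 ^ S j)%nat with (2^j * 2)%nat by (rewrite Nat.pow_succ_r'; lia).
  rewrite pow_mult. specialize (Hs j). pose proof (Hu j).
  set (A := a ^ 2^j) in *.
  assert (u j ^ 2 <= (A + 3*th)^2) by (apply pow_incr; lra). nra.
Qed.

Lemma half_mono k n : (k <= n)%nat -> (/2)^n <= (/2)^k.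
Proof.
  intros H. replace n with (k + (n-k))%nat by lia. rewrite pow_add.
  pose proof (pow_le (/2) k). assert (0 <= /2) by lra. specialize (H0 H1).
  assert ((/2)^(n-k) <= 1) by (apply pow_le_one; lra). nra.
Qed.

Lemma quarter_pow j : (/4)^(2^j) = (/2)^(2^(S j)).
Proof.
  replace (/4) with ((/2)^2) by (simpl; field).
  rewrite <- pow_mult. f_equal.
Qed.

Lemma xiter_bound w x0 b s M : 0 < w <= M -> M * (/2)^b <= /100 ->
  /2 <= w * x0 <= 1 -> (1 <= s)%nat -> (b <= 2^s)%nat ->
  0 <= 1 - w * xiter w x0 b s <= (/2)^b + 3 * (M * (/2)^b).
Proof.
  intros Hw HM Hx0 Hs Hb.
  set (E := (/2)^b) in *.
  assert (HE : 0 < E) by (apply pow_lt; lra).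
  set (e := fun i => 1 - w * xiter w x0 b i).
  assert (Hstep : forall i, e i ^ 2 <= e (S i) <= e i ^ 2 + M * E).
  { intros i. unfold e. simpl xiter.
    set (x := xiter w x0 b i).
    destruct (trunc_bounds b (- w * x ^ 2 + 2 * x)) as [T1 T2]. fold E in T1.
    assert (w * E <= M * E) by nra.
    set (t := trunc b _) in *.
    assert (Eq : 1 - w * (- w * x ^ 2 + 2 * x) = (1 - w * x)^2) by ring.
    assert (w * t <= w * (- w * x ^ 2 + 2 * x)) by (apply Rmult_le_compat_l; lra).
    assert (w * (- w * x ^ 2 + 2 * x - E) < w * t) by (apply Rmult_lt_compat_l; lra).
    split; nra. }
  assert (Hpos : forall i, 0 <= e i).
  { intros [|i]. unfold e; simpl; lra. pose proof (Hstep i). pose proof (pow2_ge_0 (e i)). lra. }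
  assert (Hd := dbl (fun j => e (S j)) (/4) (M*E)).
  assert (H1 : e 1%nat <= /4 + 3 * (M*E)).
  { pose proof (Hstep 0%nat). assert (e 0%nat <= /2) by (unfold e; simpl; lra).
    pose proof (Hpos 0%nat). nra. }
  specialize (Hd ltac:(lra) ltac:(nra) (fun j => Hpos (S j)) (fun j => proj2 (Hstep (S j))) H1 (s-1)%nat).
  simpl in Hd. replace (S (s-1)) with s in Hd by lia.
  rewrite quarter_pow in Hd. replace (S (s-1)) with s in Hd by lia.
  pose proof (half_mono b (2^s) Hb). fold E in H.
  split. apply (Hpos s). unfold e in Hd. lra.
Qed.

Lemma ystep xs y b : 0 < xs <= 2 -> 0 < y -> (/2)^b <= /1000 ->
  0 <= 1 - xs * y^2 <= 3/4 ->
  let t := trunc b ((3 * y - xs * y ^ 3) / 2) in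
  let d := 1 - xs * y^2 in
  0 < t /\ 0 <= 1 - xs * t^2 <= 3/4 * d^2 + d^3/4 + 3 * (/2)^b.
Proof.
  intros Hx Hy HE Hd t d.
  set (E := (/2)^b) in *.
  assert (HE0 : 0 < E) by (apply pow_lt; lra).
  set (y' := (3 * y - xs * y ^ 3) / 2) in *.
  destruct (trunc_bounds b y') as [T1 T2]. fold t E in T1, T2.
  assert (Hy' : y' = y * (1 + d/2)) by (unfold y', d; field).
  assert (Hd' : 1 - xs * y'^2 = 3/4 * d^2 + d^3/4).
  { rewrite Hy'. unfold d. field. }
  assert (Hy2 : y^2 >= /8).
  { assert (xs * y^2 >= /4) by (fold d; lra). nra. }
  assert (Hy3 : y >= /3) by nra.
  assert (Hyy : y' >= y) by (rewrite Hy'; fold d in Hd; nra).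
  assert (Ht : 0 < t) by lra.
  assert (Hdd : 0 <= 3/4 * d^2 + d^3/4) by (fold d in Hd; nra).
  assert (H1 : xs * y' ^2 <= 1) by lra.
  assert (H2 : (xs * y')^2 <= 2) by nra.
  assert (H3 : xs * y' <= 3/2) by nra.
  assert (H4 : t^2 <= y'^2) by nra.
  assert (H5 : t^2 >= y'^2 - 2 * y' * E) by nra.
  split; [lra|]. split.
  - assert (xs * t^2 <= xs * y'^2) by nra. lra.
  - assert (xs * t^2 >= xs * y'^2 - 2 * (xs * y') * E) by nra. nra.
Qed.

Lemma yiter_S xs y0 b k : yiter xs y0 b (S k) =
  trunc b ((3 * yiter xs y0 b k - xs * (yiter xs y0 b k) ^ 3) / 2).
Proof. reflexivity. Qed.

Lemma yiter_bound xs y0 b s : 0 < xs <= 2 -> 0 < y0 -> /4 <= xs * y0^2 <= 1 ->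
  (/2)^b <= /1000000 -> (2 <= s)%nat -> (b <= 2^s)%nat ->
  0 < yiter xs y0 b s /\
  0 <= 1 - xs * (yiter xs y0 b s)^2 <= sqrt ((/2)^b) + 9 * (/2)^b.
Proof.
  intros Hx Hy0 Hxy HE' Hs Hb.
  assert (HE : (/2)^b <= /1000) by lra.
  set (E := (/2)^b) in *.
  assert (HE0 : 0 < E) by (apply pow_lt; lra).
  set (d := fun j => 1 - xs * (yiter xs y0 b j)^2).
  assert (Inv : forall j, 0 < yiter xs y0 b j /\ 0 <= d j <= 3/4).
  { induction j as [|j [IH1 IH2]]. simpl; unfold d; simpl; lra.
    destruct (ystep xs (yiter xs y0 b j) b Hx IH1 HE IH2) as [A [B C]].
    rewrite yiter_S. split. exact A. unfold d. rewrite yiter_S. split. exact B. fold E in C. fold (d j) in C.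
    destruct IH2. assert (d j ^ 2 <= 9/16) by nra. assert (d j ^ 3 <= 27/64) by nra. lra. }
  assert (Step : forall j, d (S j) <= 3/4 * d j ^2 + d j ^3/4 + 3 * E).
  { intros j. destruct (Inv j) as [IH1 IH2].
    destruct (ystep xs (yiter xs y0 b j) b Hx IH1 HE IH2) as [A [B C]].
    unfold d; rewrite yiter_S. exact C. }
  assert (Step2 : forall j, d (S j) <= d j ^2 + 3 * E).
  { intros j. pose proof (Step j). destruct (Inv j) as [_ Hj]. nra. }
  assert (D1 : d 1%nat <= 5275/10000).
  { pose proof (Step 0%nat). destruct (Inv 0%nat) as [_ [H0 H0']].
    assert (d 0%nat ^ 2 <= 9/16) by nra. assert (d 0%nat ^ 3 <= 27/64) by nra. lra. }
  assert (D2 : d 2%nat <= /4 + 3 * (3 * E)).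
  { pose proof (Step 1%nat). destruct (Inv 1%nat) as [_ [H0 H0']].
    assert (d 1%nat ^ 2 <= 27826/100000) by nra.
    assert (d 1%nat ^ 3 <= 14680/100000) by nra. lra. }
  pose proof (dbl (fun j => d (2 + j)%nat) (/4) (3*E) ltac:(lra) ltac:(lra)
    (fun j => proj1 (proj2 (Inv (2+j)%nat))) (fun j => Step2 (2+j)%nat) D2 (s-2)%nat) as Hd.
  simpl in Hd. replace (S (S (s-2))) with s in Hd by lia.
  rewrite quarter_pow in Hd.
  set (A := (/2)^(2^S (s-2))) in *.
  assert (HA0 : 0 <= A) by (apply pow_le; lra).
  assert (HA : A^2 <= E).
  { unfold A. rewrite <- pow_mult. apply half_mono.
    replace (2 ^ S (s - 2) * 2)%nat with (2^s)%nat. lia.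
    replace s with (S (S (s-2))) at 1 by lia. rewrite !Nat.pow_succ_r'. lia. }
  assert (A <= sqrt E).
  { rewrite <- (sqrt_pow2 A HA0). apply sqrt_le_1_alt. exact HA. }
  destruct (Inv s) as [I1 I2]. split; [exact I1|]. unfold d in I2, Hd. lra.
Qed.

Lemma e2mono a c : a <= c -> exp (a * ln 2) <= exp (c * ln 2).
Proof.
  intros H. pose proof ln_lt_2. destruct (Req_dec a c) as [->|N]; [lra|].
  left. apply exp_increasing. apply Rmult_lt_compat_r; lra.
Qed.

Lemma e2m1 : exp (-1 * ln 2) = /2.
Proof. replace (-1 * ln 2) with (- ln 2) by ring. rewrite exp_Ropp, exp_ln; lra. Qed.
Lemma e2m2 : exp (-2 * ln 2) = /4.
Proof. replace (-2 * ln 2) with (- (ln 2 + ln 2)) by ring. rewrite exp_Ropp, exp_plus, exp_ln; lra. Qed.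
Lemma e20 : exp (0 * ln 2) = 1.
Proof. rewrite Rmult_0_l. apply exp_0. Qed.

Lemma sqrt_small E : 0 <= E <= /1000000 -> sqrt E <= /1000.
Proof.
  intros H. replace (/1000) with (sqrt ((/1000)^2)).
  apply sqrt_le_1_alt. lra. apply sqrt_pow2. lra.
Qed.

Lemma SQRT_bound w n m b M : /2 <= w <= M -> 1 <= M -> (3 <= b)%nat ->
  M * (/2)^b <= /1000000 ->
  let E := (/2)^b in
  let rho := 2 * (sqrt E + 10 * E + 3 * (M * E)) in
  0 <= SQRT w n m b /\
  sqrt w * (1 - rho) <= SQRT w n m b <= sqrt w * (1 + rho).
Proof.
  intros Hw HM1 Hb HM E rho.
  assert (HE0 : 0 < E) by (apply pow_lt; lra).
  assert (HE1 : E <= /1000000) by (assert (M*E <= /1000000) by exact HM; nra).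
  assert (HsE := sqrt_small E ltac:(lra)).
  assert (Hsq0 : 0 <= sqrt E) by apply sqrt_pos.
  assert (HME : M * E <= /1000000) by exact HM.
  assert (HME0 : 0 <= M * E) by (apply Rmult_le_pos; lra).
  assert (Hrho : 0 <= rho <= /100) by (unfold rho; lra).
  assert (Hsw : 0 <= sqrt w) by apply sqrt_pos.
  assert (Hsw2 : sqrt w ^ 2 = w) by (apply pow2_sqrt; lra).
  unfold SQRT. destruct (Req_EM_T w 1) as [Hw1|Hw1].
  { subst w. rewrite sqrt_1. lra. }
  cbv zeta.
  destruct (ilog2_spec w ltac:(lra)) as [K1 K2].
  set (k := ilog2 w) in *.
  set (x0 := powerRZ 2 (- (k + 1))).
  assert (Hx0 : /2 <= w * x0 <= 1).
  { unfold x0. rewrite pRZ_exp. rewrite opp_IZR, plus_IZR.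
    assert (P : 0 < exp (- (IZR k + IZR 1) * ln 2)) by apply exp_pos.
    assert (A1 : exp (IZR k * ln 2) * exp (- (IZR k + IZR 1) * ln 2) = /2).
    { rewrite <- exp_plus, <- e2m1. f_equal. simpl. ring. }
    assert (A2 : exp ((IZR k + 1) * ln 2) * exp (- (IZR k + IZR 1) * ln 2) = 1).
    { rewrite <- exp_plus. replace (_ + _) with (0 * ln 2). apply e20. simpl. ring. }
    split; nra. }
  set (s := Nat.log2_up b).
  assert (Hs : (b <= 2 ^ s)%nat) by (apply (Nat.log2_up_spec b); lia).
  assert (Hs1 : (2 <= s)%nat).
  { destruct (Nat.log2_up_spec b) as [S1 S2]; [lia|]. fold s in S1, S2.
    destruct s as [|[|s']]; simpl in *; lia. }
  destruct (xiter_bound w x0 b s M ltac:(lra) ltac:(fold E; lra) Hx0 ltac:(lia) Hs)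
    as [X1 X2].
  fold E in X2.
  set (xs := xiter w x0 b s) in *.
  set (e := 1 - w * xs) in *.
  assert (Hxs : 0 < xs <= 2).
  { assert (0 < w * xs) by (unfold e in *; lra). split. nra.
    assert (w * xs <= 1) by (unfold e in X1; lra). nra. }
  destruct (ilog2_spec xs ltac:(lra)) as [L1 L2].
  set (k' := ilog2 xs) in *.
  set (j := ((- k' - 1) / 2)%Z).
  assert (Hj : (- k' - 2 <= 2 * j <= - k' - 1)%Z) by (unfold j; pose proof (Z.div_mod (- k' - 1) 2 ltac:(lia));
    pose proof (Z.mod_pos_bound (- k' - 1) 2 ltac:(lia)); lia).
  set (y0 := powerRZ 2 ((- k' - 1) / 2)).
  assert (Hy0 : 0 < y0) by (unfold y0; rewrite pRZ_exp; apply exp_pos).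
  assert (Hy0s : y0 ^ 2 = exp (IZR (2 * j) * ln 2)).
  { unfold y0. fold j. rewrite pRZ_exp.
    replace (exp (IZR j * ln 2) ^ 2) with (exp (IZR j*ln 2) * exp (IZR j * ln 2)) by ring.
    rewrite <- exp_plus. f_equal. rewrite mult_IZR. ring. }
  assert (Hxy : /4 <= xs * y0 ^ 2 <= 1).
  { rewrite Hy0s. destruct Hj as [J1 J2]. apply IZR_le in J1, J2.
    rewrite minus_IZR, opp_IZR in J1. rewrite minus_IZR, opp_IZR in J2.
    assert (P : 0 < exp (IZR (2 * j) * ln 2)) by apply exp_pos.
    split.
    - apply Rle_trans with (exp (IZR k' * ln 2) * exp (IZR (2 * j) * ln 2)); [|nra].
      rewrite <- exp_plus, <- e2m2. rewrite <- Rmult_plus_distr_r. apply e2mono. lra.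
    - apply Rle_trans with (exp ((IZR k' + 1) * ln 2) * exp (IZR (2 * j) * ln 2)); [nra|].
      rewrite <- exp_plus, <- Rmult_plus_distr_r.
      apply Rle_trans with (exp (0*ln 2)); [apply e2mono; lra | rewrite e20; lra]. }
  replace (- - k')%Z with k' by lia. fold y0.
  replace (((- k' - 1) / 2))%Z with ((- k' - 1) / 2)%Z by reflexivity.
  destruct (yiter_bound xs y0 b s Hxs Hy0 Hxy ltac:(fold E; lra) Hs1 Hs) as [Y1 Y2].
  fold E in Y2.
  set (y := yiter xs y0 b s) in *.
  set (d := 1 - xs * y^2) in *.
  assert (Id : y^2 * (1 - e) = w * (1 - d)) by (unfold d, e; ring).
  assert (He : e <= /2) by lra.
  assert (Hd : d <= rho) by (unfold rho; lra).
  assert (He2 : 2 * e <= rho) by (unfold rho; lra).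
  assert (U : y^2 <= (sqrt w * (1 + rho))^2).
  { rewrite Rpow_mult_distr, Hsw2.
    assert (Q1 : (1 + rho)^2 >= 1 + 2 * e) by nra.
    assert (Q2 : (1 + rho)^2 * (1 - e) >= 1) by nra.
    assert (Q3 : w * ((1 + rho)^2 * (1 - e)) >= w * 1) by (apply Rle_ge, Rmult_le_compat_l; lra).
    assert (Q4 : 0 <= d) by lra.
    apply Rmult_le_reg_r with (1 - e). lra. nra. }
  assert (L : (sqrt w * (1 - rho))^2 <= y^2).
  { rewrite Rpow_mult_distr, Hsw2.
    assert (R1 : (1 - rho)^2 <= 1 - d) by nra.
    assert (R2 : w * (1 - rho)^2 <= w * (1 - d)) by (apply Rmult_le_compat_l; lra).
    assert (R3 : y^2 * (1 - e) <= y^2) by (pose proof (pow2_ge_0 y); nra).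
    lra. }
  change (powerRZ 2 j) with y0. fold y. split; [lra|]. split.
  - assert (0 <= sqrt w * (1 - rho)) by nra. nra.
  - assert (0 <= sqrt w * (1 + rho)) by nra. nra.
Qed.

Lemma P2R_SS w k n m b : PowerOf2Root w (S (S k)) n m b = SQRT (PowerOf2Root w (S k) n m b) (m+b) m b.
Proof. reflexivity. Qed.
Lemma P2R_1 w n m b : PowerOf2Root w 1 n m b = SQRT w n m b.
Proof. reflexivity. Qed.

Definition troot (w : R) (i : nat) := Rpower w (/ 2 ^ i).

Lemma troot_S w i : 0 < w -> troot w (S i) = sqrt (troot w i).
Proof.
  intros Hw. unfold troot. rewrite <- Rpower_sqrt by (apply exp_pos).
  rewrite Rpower_mult. f_equal. simpl. field. apply pow_nonzero. lra.
Qed.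

Lemma troot_bounds w i : 1 <= w -> (1 <= i)%nat -> 1 <= troot w i <= sqrt w.
Proof.
  intros Hw Hi. unfold troot. assert (0 < 2^i) by (apply pow_lt; lra).
  assert (2 <= 2^i).
  { replace i with (S (i-1)) by lia. simpl. pose proof (pow_R1_Rle 2 (i-1)). lra. }
  split.
  - rewrite <- (Rpower_O w) by lra. apply Rle_Rpower; auto. left. apply Rinv_0_lt_compat. lra.
  - rewrite <- Rpower_sqrt by lra. apply Rle_Rpower; auto. apply Rinv_le_contravar; lra.
Qed.

Lemma sqrt_up r : 0 <= r -> sqrt (1 + 3 * r) <= 1 + 3/2 * r.
Proof.
  intros H. rewrite <- (sqrt_pow2 (1 + 3/2*r)) by lra. apply sqrt_le_1_alt. nra.
Qed.
Lemma sqrt_dn r : 0 <= r <= /100 -> 1 - 8/5 * r <= sqrt (1 - 3 * r).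
Proof.
  intros H. rewrite <- (sqrt_pow2 (1 - 8/5*r)) by lra. apply sqrt_le_1_alt. nra.
Qed.

Lemma P2R_bound w n m b M : 1 < w < M -> 2 <= M -> (3 <= b)%nat ->
  M * (/2)^b <= /1000000 ->
  let E := (/2)^b in
  let rho := 2 * (sqrt E + 10 * E + 3 * (M * E)) in
  forall i, (1 <= i)%nat ->
  troot w i * (1 - 3 * rho) <= PowerOf2Root w i n m b <= troot w i * (1 + 3 * rho).
Proof.
  intros Hw HM Hb HME E rho.
  assert (HE0 : 0 < E) by (apply pow_lt; lra).
  assert (HE1 : E <= /1000000) by (assert (M*E <= /1000000) by exact HME; nra).
  assert (HsE := sqrt_small E ltac:(lra)).
  assert (Hsq0 : 0 <= sqrt E) by apply sqrt_pos.
  assert (HME' : M * E <= /1000000) by exact HME.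
  assert (HME0 : 0 <= M * E) by (apply Rmult_le_pos; lra).
  assert (Hrho : 0 <= rho <= /100) by (unfold rho; lra).
  assert (HsM : sqrt w * (1 + 3 * rho) <= M).
  { assert (sqrt w <= sqrt M) by (apply sqrt_le_1_alt; lra).
    assert (sqrt M * sqrt M = M) by (apply sqrt_sqrt; lra).
    assert (0 <= sqrt M) by apply sqrt_pos.
    assert (1.1 <= sqrt M) by nra.
    assert (0 <= sqrt w) by apply sqrt_pos.
    assert (sqrt w * (1 + 3 * rho) <= sqrt M * (1 + 3 * rho)) by (apply Rmult_le_compat_r; lra).
    nra. }
  intros i Hi. destruct i as [|k]; [lia|]. clear Hi.
  induction k as [|k IH].
  - rewrite P2R_1. unfold troot. simpl. rewrite Rmult_1_r, Rpower_sqrt by lra.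
    destruct (SQRT_bound w n m b M ltac:(lra) ltac:(lra) Hb HME) as [_ [A B]].
    fold E rho in A, B. assert (0 <= sqrt w) by apply sqrt_pos. nra.
  - rewrite P2R_SS. set (z := PowerOf2Root w (S k) n m b) in *.
    destruct (troot_bounds w (S k) ltac:(lra) ltac:(lia)) as [T1 T2].
    set (t := troot w (S k)) in *.
    destruct (SQRT_bound z (m+b) m b M ltac:(nra) ltac:(lra) Hb HME) as [_ [A B]].
    fold E rho in A, B.
    rewrite troot_S by lra. fold t.
    assert (Hst : 0 <= sqrt t) by apply sqrt_pos.
    assert (U : sqrt z <= sqrt t * (1 + 3/2 * rho)).
    { apply Rle_trans with (sqrt (t * (1 + 3 * rho))). apply sqrt_le_1_alt; lra.
      rewrite sqrt_mult by nra. apply Rmult_le_compat_l; auto. apply sqrt_up; lra. }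
    assert (L : sqrt t * (1 - 8/5 * rho) <= sqrt z).
    { apply Rle_trans with (sqrt (t * (1 - 3 * rho))).
      rewrite sqrt_mult by nra. apply Rmult_le_compat_l; auto. apply sqrt_dn; lra.
      apply sqrt_le_1_alt; lra. }
    split.
    + apply Rle_trans with (sqrt z * (1 - rho)); [|exact A].
      apply Rle_trans with (sqrt t * (1 - 8/5 * rho) * (1 - rho)); [nra|].
      apply Rmult_le_compat_r; lra.
    + apply Rle_trans with (sqrt z * (1 + rho)); [exact B|].
      apply Rle_trans with (sqrt t * (1 + 3/2 * rho) * (1 + rho)); [|nra].
      apply Rmult_le_compat_r; lra.
Qed.

Lemma pRZ_neg_nat k : powerRZ 2 (- Z.of_nat k) = / 2 ^ k.
Proof. rewrite powerRZ_neg', <- pow_powerRZ. reflexivity. Qed.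

Lemma fracsum_S fb k : fracsum fb (S k) = fracsum fb k + (if fb (S k) then / 2^(S k) else 0).
Proof.
  change (fracsum fb (S k)) with (fracsum fb k + (if fb (S k) then powerRZ 2 (- Z.of_nat (S k)) else 0)).
  rewrite pRZ_neg_nat. reflexivity.
Qed.

Lemma prodloop_S w fb k n m b : prodloop w fb (S k) n m b =
  if fb (S k) then trunc b (prodloop w fb k n m b * PowerOf2Root w (S k) n m b)
  else prodloop w fb k n m b.
Proof. reflexivity. Qed.

Lemma fracsum_nonneg fb k : 0 <= fracsum fb k.
Proof.
  induction k. simpl; lra. rewrite fracsum_S. destruct (fb (S k)); [|lra].
  assert (0 < / 2^(S k)) by (apply Rinv_0_lt_compat, pow_lt; lra). lra.
Qed.

Lemma prod_bound w n m b fb rho : 1 < w -> rho >= 20 * (/2)^b ->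
  (forall i, (1 <= i)%nat ->
    troot w i * (1 - 3 * rho) <= PowerOf2Root w i n m b <= troot w i * (1 + 3 * rho)) ->
  0 <= rho ->
  forall k, 12 * INR k * rho <= 1 ->
  Rpower w (fracsum fb k) * (1 - 4 * INR k * rho) <= prodloop w fb k n m b
   <= Rpower w (fracsum fb k) * (1 + 4 * INR k * rho).
Proof.
  intros Hw Hrho HP Hr0 k. induction k as [|k IH]; intros Hk.
  - simpl. rewrite Rpower_O by lra. lra.
  - rewrite S_INR in Hk |- *.
    assert (IH' := IH ltac:(pose proof (pos_INR k); lra)).
    assert (HE0 : 0 < (/2)^b) by (apply pow_lt; lra).
    set (P := Rpower w (fracsum fb k)) in *.
    assert (HP1 : 1 <= P).
    { unfold P. rewrite <- (Rpower_O w) by lra. apply Rle_Rpower. lra. apply fracsum_nonneg. }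
    assert (Hr12 : rho <= /12) by (pose proof (pos_INR k); nra).
    set (c := 4 * INR k * rho) in *.
    assert (Hc : 0 <= c <= /3) by (unfold c; pose proof (pos_INR k); nra).
    rewrite fracsum_S, prodloop_S.
    destruct (fb (S k)).
    + rewrite Rpower_plus. fold P.
      fold (troot w (S k)).
      destruct (HP (S k) ltac:(lia)) as [A B].
      set (z := PowerOf2Root w (S k) n m b) in *.
      set (t := troot w (S k)) in *.
      destruct (trunc_bounds b (prodloop w fb k n m b * z)) as [T1 T2].
      set (Z := prodloop w fb k n m b) in *.
      assert (Ht : 1 <= t) by (apply troot_bounds; lia || lra).
      assert (HPt : 1 <= P * t) by nra.
      assert (HZ0 : 0 <= Z) by (assert (0 <= P * (1 - c)) by nra; lra).
      assert (Hz0 : 0 <= z) by (assert (0 <= t * (1 - 3*rho)) by nra; lra).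
      assert (U : Z * z <= P * t * (1 + (4 * INR k * rho + 4 * rho))).
      { apply Rle_trans with (P * (1 + c) * (t * (1 + 3 * rho))).
        apply Rmult_le_compat; lra.
        fold c. assert (c * rho <= rho / 3) by nra. nra. }
      assert (L : P * t * (1 - c - 3 * rho) <= Z * z).
      { apply Rle_trans with (P * (1 - c) * (t * (1 - 3 * rho))).
        assert (c * rho >= 0) by nra. nra.
        apply Rmult_le_compat; nra. }
      fold c. split.
      2:{ assert (E3 : P * t * (1 + 4 * (INR k + 1) * rho) = P * t * (1 + (4 * INR k * rho + 4 * rho))) by ring.
          rewrite E3. lra. }
      assert (E1 : (/2)^b <= P * t * rho) by (assert ((P*t - 1)*rho >= 0) by nra; nra).
      assert (E2 : P * t * (1 - 4 * (INR k + 1) * rho) = P * t * (1 - c - 3 * rho) - P * t * rho) by (unfold c; ring).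
      rewrite E2. lra.
    + rewrite Rplus_0_r. fold P.
      assert (0 <= P * rho) by nra.
      assert (E2 : P * (1 - 4 * (INR k + 1) * rho) = P * (1 - c) - 4 * (P * rho)) by (unfold c; ring).
      assert (E3 : P * (1 + 4 * (INR k + 1) * rho) = P * (1 + c) + 4 * (P * rho)) by (unfold c; ring).
      rewrite E2, E3. lra.
Qed.

Lemma ln_le' x y : 0 < x -> x <= y -> ln x <= ln y.
Proof. intros Hx [H|H]. left; apply ln_increasing; auto. subst; lra. Qed.

Lemma exp_le' x y : x <= y -> exp x <= exp y.
Proof. intros [H|H]. left; apply exp_increasing; auto. subst; lra. Qed.

Lemma numeric b l m nf : (1 <= m)%nat -> (1 <= nf)%nat -> 40 <= INR b ->
  5 * (INR l + 2 * INR m + ln (INR nf)) <= INR b ->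
  10000 * (2^m)^2 * (INR nf)^2 * (2^l)^2 * (/2)^b <= 1.
Proof.
  intros Hm Hnf Hb H5.
  assert (HL := ln_lt_2).
  assert (Hn : 1 <= INR nf) by (apply (le_INR 1); auto).
  assert (Hm1 : 1 <= INR m) by (apply (le_INR 1); auto).
  assert (Hlnf : 0 <= ln (INR nf)) by (rewrite <- ln_1; apply ln_le'; lra).
  assert (Hl0 := pos_INR l).
  assert (P2 : forall k, 0 < 2^k) by (intros; apply pow_lt; lra).
  set (X := 10000 * (2^m)^2 * (INR nf)^2 * (2^l)^2).
  assert (HX : 0 < X) by (unfold X; pose proof (P2 m); pose proof (P2 l); apply Rmult_lt_0_compat; [|apply pow_lt; auto]; apply Rmult_lt_0_compat; [|apply pow_lt; lra]; apply Rmult_lt_0_compat; [lra|apply pow_lt; auto]).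
  assert (lnX : ln X = ln 10000 + 2 * (INR m * ln 2) + 2 * ln (INR nf) + 2 * (INR l * ln 2)).
  { unfold X. rewrite !ln_mult; try (apply pow_lt; auto); try lra;
      try (apply Rmult_lt_0_compat; try lra; apply pow_lt; auto);
      try (repeat apply Rmult_lt_0_compat; try lra; apply pow_lt; auto; lra).
    rewrite !ln_pow by (auto; lra). replace (INR 2) with 2 by (rewrite INR_IZR_INZ; reflexivity). ring. }
  assert (l10 : ln 10000 <= 14 * ln 2).
  { replace (14 * ln 2) with (INR 14 * ln 2) by (simpl; ring). rewrite <- ln_pow by lra.
    apply ln_le'; simpl; lra. }
  assert (lnX2 : ln X <= INR b * ln 2).
  { rewrite lnX. assert (2 * ln (INR nf) <= 4 * ln 2 * ln (INR nf)) by nra.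
    assert (INR b * ln 2 = (1/5) * INR b * ln 2 + (4/5) * INR b * ln 2) by field.
    assert ((1/5) * 40 * ln 2 <= (1/5) * INR b * ln 2) by nra.
    assert ((4/5) * 5 * (INR l + 2 * INR m + ln (INR nf)) * ln 2 <= (4/5) * INR b * ln 2) by nra.
    nra. }
  assert (X <= 2^b).
  { rewrite <- (exp_ln X) by auto. rewrite <- (exp_ln (2^b)) by auto.
    apply exp_le'. rewrite ln_pow by lra. lra. }
  rewrite pow_inv. fold X. apply Rmult_le_reg_r with (2^b); auto.
  rewrite Rmult_assoc, Rinv_l by (apply pow_nonzero; lra). lra.
Qed.

Lemma bitsum_bound bits lo len :
  bitsum bits lo len <= powerRZ 2 (lo + Z.of_nat len) - powerRZ 2 lo.
Proof.
  induction len as [|k IH].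
  - simpl. rewrite Z.add_0_r. lra.
  - simpl bitsum. rewrite Nat2Z.inj_succ, <- Z.add_1_r, Z.add_assoc.
    rewrite (powerRZ_add 2 (lo + Z.of_nat k) 1) by lra. simpl (powerRZ 2 1).
    assert (0 < powerRZ 2 (lo + Z.of_nat k)) by (apply powerRZ_lt; lra).
    destruct (bits k); lra.
Qed.

Lemma INR_toNat z : IZR z <= INR (Z.to_nat z).
Proof.
  destruct (Z_le_gt_dec 0 z).
  - rewrite INR_IZR_INZ, Z2Nat.id by lia. lra.
  - assert (IZR z < 0) by (apply IZR_lt; lia). pose proof (pos_INR (Z.to_nat z)). lra.
Qed.

Lemma Zceil_ge x : x <= IZR (Zceil x).
Proof.
  unfold Zceil. rewrite opp_IZR. change (Zfloor (- x)) with (Int_part (- x)). destruct (base_Int_part (- x)). lra.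
Qed.

Lemma half40 : (/2)^40 <= / 1000000000000.
Proof. rewrite pow_inv. apply Rinv_le_contravar. lra. simpl. lra. Qed.

Theorem theorem4 (n m nf l : nat) (w : R) (wbits : nat -> bool)
  (f : R) (fbits : nat -> bool) :
  1 < w ->
  w = bitsum wbits (Z.of_nat m - Z.of_nat n)%Z n ->
  ((f = fracsum fbits nf /\ 0 <= f <= 1) \/ f = 1) ->
  Rabs (FractionalPower w f fbits n m nf l - Rpower w f)
    <= powerRZ (/ 2) (Z.of_nat l - 1)%Z.
Proof.
  intros Hw1 Hwb Hf.
  assert (Hrhs : powerRZ (/2) (Z.of_nat l - 1) = 2 * (/2)^l).
  { unfold Z.sub. rewrite powerRZ_add by lra. rewrite <- pow_powerRZ. simpl. field. }
  assert (Hl0 : 0 < (/2)^l) by (apply pow_lt; lra).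
  rewrite Hrhs.
  unfold FractionalPower.
  destruct (Req_EM_T f 1) as [F1|F1].
  { subst f. rewrite Rpower_1 by lra. rewrite Rminus_diag, Rabs_R0. lra. }
  destruct (Req_EM_T f 0) as [F0|F0].
  { subst f. rewrite Rpower_O by lra. rewrite Rminus_diag, Rabs_R0. lra. }
  destruct Hf as [[Hf [Hf0 Hf1]]|Hf]; [|contradiction].
  assert (Hnf : (1 <= nf)%nat) by (destruct nf; [simpl in Hf; contradiction|lia]).
  set (M := 2 ^ m).
  assert (HwM : w < M).
  { pose proof (bitsum_bound wbits (Z.of_nat m - Z.of_nat n) n).
    replace (Z.of_nat m - Z.of_nat n + Z.of_nat n)%Z with (Z.of_nat m) in H by lia.
    rewrite <- pow_powerRZ in H. fold M in H.
    assert (0 < powerRZ 2 (Z.of_nat m - Z.of_nat n)) by (apply powerRZ_lt; lra). lra. }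
  assert (Hm : (1 <= m)%nat) by (destruct m; [unfold M in HwM; simpl in HwM; lra|lia]).
  assert (HM2 : 2 <= M) by (unfold M; replace m with (S (m-1)) by lia; simpl;
    pose proof (pow_R1_Rle 2 (m-1)); lra).
  set (b := FP_b n m nf l).
  set (X := 5 * (INR l + 2 * INR m + ln (INR nf))).
  assert (Hbmax : forall a, (a <= Nat.max (Z.to_nat (Zceil X)) 40)%nat -> (a <= b)%nat).
  { intros a Ha. unfold b, FP_b. fold X.
    eapply Nat.le_trans; [|apply Nat.le_max_r]. eapply Nat.le_trans; [|apply Nat.le_max_r]. exact Ha. }
  assert (Hb40 : (40 <= b)%nat) by (apply Hbmax, Nat.le_max_r).
  assert (HbX : X <= INR b).
  { apply Rle_trans with (IZR (Zceil X)). apply Zceil_ge.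
    apply Rle_trans with (INR (Z.to_nat (Zceil X))). apply INR_toNat.
    apply le_INR. apply Hbmax, Nat.le_max_l. }
  assert (Hb40' : 40 <= INR b) by (apply (le_INR 40) in Hb40; simpl in Hb40; lra).
  pose proof (numeric b l m nf Hm Hnf Hb40' HbX) as Num.
  fold M in Num.
  set (E := (/2)^b) in *.
  assert (HE0 : 0 < E) by (apply pow_lt; lra).
  assert (HE40 : E <= / 1000000000000) by (pose proof (half_mono 40 b Hb40); pose proof half40; unfold E; lra).
  set (sE := sqrt E).
  assert (HsE2 : sE * sE = E) by (apply sqrt_sqrt; lra).
  assert (HsE0 : 0 <= sE) by apply sqrt_pos.
  assert (HsE : sE <= / 1000000).
  { unfold sE. replace (/1000000) with (sqrt ((/1000000)^2)).
    apply sqrt_le_1_alt. lra. apply sqrt_pow2. lra. }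
  assert (Hnf1 : 1 <= INR nf) by (apply (le_INR 1); auto).
  assert (H2l : 1 <= 2^l) by (apply pow_R1_Rle; lra).
  assert (H2l' : 2^l * (/2)^l = 1) by (rewrite <- Rpow_mult_distr, Rinv_r, pow1; lra).
  set (K := M * INR nf * 2^l * sE).
  assert (HK0 : 0 <= K).
  { unfold K. apply Rmult_le_pos; [|lra]. apply Rmult_le_pos; [|lra]. apply Rmult_le_pos; lra. }
  assert (HK : K <= /100).
  { assert (K * K <= /10000).
    { replace (K * K) with (M^2 * INR nf^2 * (2^l)^2 * E) by (unfold K; rewrite <- HsE2; ring).
      lra. }
    nra. }
  assert (HMs : M * sE <= /100).
  { assert (0 <= M * sE) by nra. assert (1 <= INR nf * 2^l) by nra.
    assert (K = (M * sE) * (INR nf * 2^l)) by (unfold K; ring). nra. }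
  assert (HME : M * E <= / 1000000) by (rewrite <- HsE2; nra).
  pose proof (P2R_bound w n m b M ltac:(lra) HM2 ltac:(lia) HME) as HP.
  cbv zeta in HP. fold E in HP. fold sE in HP.
  set (rho := 2 * (sE + 10 * E + 3 * (M * E))) in *.
  assert (Hrho : rho <= 3 * sE).
  { unfold rho. rewrite <- HsE2. nra. }
  assert (Hrho0 : 0 <= rho) by (unfold rho; nra).
  assert (Hrho20 : rho >= 20 * E) by (unfold rho; nra).
  assert (Hnfs : INR nf * sE <= K / 2).
  { unfold K. assert (2 <= M * 2^l) by nra. assert (0 <= INR nf * sE) by nra. nra. }
  assert (H12 : 12 * INR nf * rho <= 1) by nra.
  pose proof (prod_bound w n m b fbits rho Hw1 Hrho20 HP Hrho0 nf H12) as [PL PU].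
  rewrite <- Hf in PL, PU.
  set (P := Rpower w f) in *.
  set (Z := prodloop w fbits nf n m b) in *.
  assert (HP1 : 0 <= P) by (unfold P, Rpower; left; apply exp_pos).
  assert (HPw : P <= M).
  { assert (P <= w). { unfold P. rewrite <- (Rpower_1 w) at 2 by lra. apply Rle_Rpower; lra. } lra. }
  assert (Hbound : 4 * INR nf * rho * P <= 12 * K * (/2)^l).
  { assert (4 * INR nf * rho * P <= 12 * INR nf * sE * M).
    { assert (0 <= INR nf * rho) by nra.
      assert (4 * INR nf * rho * P <= 4 * INR nf * rho * M) by nra. nra. }
    replace (12 * K * (/2)^l) with (12 * INR nf * sE * M * (2^l * (/2)^l)) by (unfold K; ring).
    rewrite H2l'. lra. }
  apply Rabs_le. split; nra.
Qed.
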